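(* Consider the remote-estimation Markov decision process described in the context, and suppose in addition that the source is non-prioritized and symmetric: $D_{i,j}=D$ and $g_{i,j}=g$ for all $i\ne j$, and $Q_{i,j}=p$ for $i\ne j$, $Q_{i,i}=\bar p$, where $\bar p+(M-1)p=1$ and $0<p<1$. Then the optimal (switching) policy degenerates to a threshold policy: there is a single threshold $\tau^*\in\{1,2,\dots\}\cup\{\infty\}$ such that $\tau^*_{i,j}=\tau^*$ for all $i\ne j$, i.e. the sensor transmits in state $(i,j,\delta)$, $i\neq j$, if and only if $\delta\ge\tau^*$, and never transmits in synced states.
   Context: Model. A source $\{X_t\}_{t\ge1}$ is a homogeneous discrete-time Markov chain on $\mathcal{X}=\{1,\dots,M\}$ with irreducible transition matrix $Q=(Q_{i,j})$, with at least one $i$ having $Q_{i,i}>0$. At each time $t$ a sensor chooses $A_t\in\{0,1\}$ (1 = transmit). The channel is i.i.d. Bernoulli $H_t$ with $\Pr[H_t=1]=p_s$, $p_f=1-p_s$, independent of the source. The estimate evolves as $\hat X_{t+1}=X_t$ if $A_t=1,H_t=1$, else $\hat X_{t+1}=\hat X_t$. The AoCE is $\Delta_t=\Delta_{t-1}+1$ if $X_t\ne\hat X_t$ and $(X_t,\hat X_t)=(X_{t-1},\hat X_{t-1})$; $\Delta_t=1$ if $X_t\ne\hat X_t$ and $(X_t,\hat X_t)\ne(X_{t-1},\hat X_{t-1})$; $\Delta_t=0$ if $X_t=\hat X_t$. State $S_t=(X_t,\hat X_t,\Delta_t)$. Transition probabilities: for $s=(i,j,\delta)$, $i\ne j$,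 under $a=0$: to $(i,j,\delta+1)$ w.p. $Q_{i,i}$, to $(j,j,0)$ w.p. $Q_{i,j}$, to $(k,j,1)$ w.p. $Q_{i,k}$ ($k\ne i,j$); under $a=1$: to $(i,i,0)$ w.p. $Q_{i,i}p_s$, to $(k,i,1)$ w.p. $Q_{i,k}p_s$ ($k\ne i$), to $(i,j,\delta+1)$ w.p. $Q_{i,i}p_f$, to $(j,j,0)$ w.p. $Q_{i,j}p_f$, to $(k,j,1)$ w.p. $Q_{i,k}p_f$ ($k\ne i,j$). For $s=(i,i,0)$ and any $a$: to $(i,i,0)$ w.p. $Q_{i,i}$, to $(k,i,1)$ w.p. $Q_{i,k}$ ($k\ne i$). Costs: $c(i,j,\delta)=D_{i,j}g_{i,j}(\delta)$ for $i\ne j$ with $D_{i,j}>0$ and $g_{i,j}$ non-negative, non-decreasing; $c(i,i,0)=0$; per-stage cost $l(s,a)=c(s)+\lambda\mathbb{1}\{a\ne0\}$, $\lambda\ge0$. Policies may depend on the full history $(X_{1:t},\hat X_{1:t},A_{1:t-1})$; average cost $\mathcal{L}(\pi)=\limsup_{T\to\infty}\frac1T\sum_{t=1}^T\mathbb{E}^\pi[l(S_t,A_t)\mid S_1=s_1]$; an optimal policy attains $\inf_\pi\mathcal{L}(\pi)$. A switching policy is one that never transmits in synced states $(i,i,0)$ and, for each error $(i,j)$, $i\ne j$, transmits in $(i,j,\delta)$ iff $\delta\ge\tau_{i,j}$ for some threshold $\tau_{i,j}\in\{1,2,\dots\}\cup\{\infty\}$. *)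

(* Defs.v *)
From Stdlib Require Import Reals List Arith Lia Bool.
From Coquelicot Require Import Coquelicot.
Import ListNotations.
Open Scope R_scope.

(* Source alphabet {1,...,M} is encoded as {0,...,M-1}.
   A state (x, xhat, delta) of the MDP. Actions: true = transmit (a=1). *)
Definition state : Type := (nat * nat * nat)%type.

Definition valid_state (M : nat) (s : state) : Prop :=
  let '(i, j, d) := s in
  (i < M)%nat /\ (j < M)%nat /\
  ((i = j /\ d = 0%nat) \/ (i <> j /\ (1 <= d)%nat)).

Fixpoint Rsum (l : list R) : R :=
  match l with [] => 0 | x :: t => x + Rsum t end.

Fixpoint Qpow (M : nat) (Q : nat -> nat -> R) (n : nat) (i j : nat) : R :=
  match n with
  | O => if Nat.eqb i j then 1 else 0
  | S n' => Rsum (map (fun k => Qpow M Q n' i k * Q k j) (seq 0 M))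
  end.

Definition stochastic (M : nat) (Q : nat -> nat -> R) : Prop :=
  (forall i j, (i < M)%nat -> (j < M)%nat -> 0 <= Q i j) /\
  (forall i, (i < M)%nat -> Rsum (map (fun j => Q i j) (seq 0 M)) = 1).

Definition irreducible (M : nat) (Q : nat -> nat -> R) : Prop :=
  forall i j, (i < M)%nat -> (j < M)%nat -> exists n, 0 < Qpow M Q n i j.

Definition err_moves (M : nat) (Q : nat -> nat -> R) (i j d : nat) (w : R)
  : list (state * R) :=
  ((i, j, S d), Q i i * w) :: ((j, j, 0%nat), Q i j * w) ::
  map (fun k => ((k, j, 1%nat), Q i k * w))
      (filter (fun k => andb (negb (Nat.eqb k i)) (negb (Nat.eqb k j))) (seq 0 M)).

Definition sync_moves (M : nat) (Q : nat -> nat -> R) (i : nat) (w : R)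
  : list (state * R) :=
  ((i, i, 0%nat), Q i i * w) ::
  map (fun k => ((k, i, 1%nat), Q i k * w))
      (filter (fun k => negb (Nat.eqb k i)) (seq 0 M)).

Definition kernel (M : nat) (Q : nat -> nat -> R) (ps : R) (s : state) (a : bool)
  : list (state * R) :=
  let '(i, j, d) := s in
  if Nat.eqb i j then sync_moves M Q i 1
  else if a then sync_moves M Q i ps ++ err_moves M Q i j d (1 - ps)
  else err_moves M Q i j d 1.

Definition stage_cost (D : nat -> nat -> R) (g : nat -> nat -> nat -> R)
  (lam : R) (s : state) (a : bool) : R :=
  let '(i, j, d) := s in
  (if Nat.eqb i j then 0 else D i j * g i j d) + (if a then lam else 0).

(* A (possibly randomized) history-dependent policy: given the past
   history (list of (state, action) pairs, most recent first) and the
   current state, it returns the probability of transmitting.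
   The history of states and actions carries exactly the information
   (X_{1:t}, Xhat_{1:t}, A_{1:t-1}) (Delta being a function of it and S_1). *)
Definition policy : Type := list (state * bool) -> state -> R.

Definition valid_policy (pi : policy) : Prop :=
  forall h s, 0 <= pi h s <= 1.

Definition act_prob (pi : policy) (h : list (state * bool)) (s : state)
  (a : bool) : R :=
  if a then pi h s else 1 - pi h s.

(* dist n = finite list of (history up to time n+1 incl. action A_{n+1},
   probability) describing the law of (S_1,A_1,...,S_{n+1},A_{n+1}). *)
Fixpoint dist (M : nat) (Q : nat -> nat -> R) (ps : R) (pi : policy)
  (s1 : state) (n : nat) : list (list (state * bool) * R) :=
  match n with
  | O => map (fun a => ([(s1, a)], act_prob pi [] s1 a)) [true; false]
  | S n' =>
      flat_map (fun hq =>
        let '(h, q) := hq in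
        match h with
        | [] => []
        | (s, a) :: _ =>
            flat_map (fun sp =>
              let '(s', pr) := sp in
              map (fun a' => ((s', a') :: h, q * pr * act_prob pi h s' a'))
                  [true; false])
              (kernel M Q ps s a)
        end) (dist M Q ps pi s1 n')
  end.

Definition exp_cost (M : nat) (Q : nat -> nat -> R) (ps : R)
  (D : nat -> nat -> R) (g : nat -> nat -> nat -> R) (lam : R)
  (pi : policy) (s1 : state) (n : nat) : R :=
  Rsum (map (fun hq =>
    let '(h, q) := hq in
    match h with
    | [] => 0
    | (s, a) :: _ => q * stage_cost D g lam s a
    end) (dist M Q ps pi s1 n)).

Definition avg_cost (M : nat) (Q : nat -> nat -> R) (ps : R)
  (D : nat -> nat -> R) (g : nat -> nat -> nat -> R) (lam : R)
  (pi : policy) (s1 : state) : Rbar :=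
  LimSup_seq (fun T =>
    Rsum (map (exp_cost M Q ps D g lam pi s1) (seq 0 (S T))) / INR (S T)).

Definition optimal (M : nat) (Q : nat -> nat -> R) (ps : R)
  (D : nat -> nat -> R) (g : nat -> nat -> nat -> R) (lam : R)
  (s1 : state) (pi : policy) : Prop :=
  valid_policy pi /\
  forall pi', valid_policy pi' ->
    Rbar_le (avg_cost M Q ps D g lam pi s1) (avg_cost M Q ps D g lam pi' s1).

(* Thresholds in {1,2,...} U {infinity}: Some k (k>=1) or None (= infinity). *)
Definition valid_threshold (tau : option nat) : Prop :=
  match tau with Some k => (1 <= k)%nat | None => True end.

Definition switching_policy (tau : nat -> nat -> option nat) : policy :=
  fun _ s =>
    let '(i, j, d) := s in
    if Nat.eqb i j then 0
    else match tau i j with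
         | Some k => if Nat.leb k d then 1 else 0
         | None => 0
         end.

(* Main.v *)
Require Import Defs.
From Stdlib Require Import Reals List Arith Lia Lra Bool Classical.
From Coquelicot Require Import Coquelicot.
Import ListNotations.
Open Scope R_scope.

Lemma Rsum_app l1 l2 : Rsum (l1 ++ l2) = Rsum l1 + Rsum l2.
Proof. induction l1; simpl; [lra| rewrite IHl1; lra]. Qed.

Lemma Rsum_map_ext {A} (f g : A -> R) l :
  (forall x, In x l -> f x = g x) -> Rsum (map f l) = Rsum (map g l).
Proof.
  induction l; simpl; intros H; auto.
  rewrite H by auto. rewrite IHl by auto. reflexivity.
Qed.

Lemma Rsum_map_le {A} (f g : A -> R) l :
  (forall x, In x l -> f x <= g x) -> Rsum (map f l) <= Rsum (map g l).
Proof.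
  induction l; simpl; intros H; [lra|].
  specialize (H a (or_introl eq_refl)) as H1.
  assert (Rsum (map f l) <= Rsum (map g l)) by (apply IHl; auto). lra.
Qed.

Lemma Rsum_map_scal {A} c (f : A -> R) l :
  Rsum (map (fun x => c * f x) l) = c * Rsum (map f l).
Proof. induction l; simpl; [ring| rewrite IHl; ring]. Qed.

Lemma Rsum_map_const {A} c (l : list A) :
  Rsum (map (fun _ => c) l) = INR (length l) * c.
Proof.
  induction l; simpl length; [simpl; ring|].
  rewrite S_INR. simpl. rewrite IHl. ring.
Qed.

Lemma Rsum_map_flat_map {A B} (F : B -> R) (G : A -> list B) l :
  Rsum (map F (flat_map G l)) = Rsum (map (fun x => Rsum (map F (G x))) l).
Proof.
  induction l; simpl; auto. rewrite map_app, Rsum_app, IHl. reflexivity.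
Qed.

Lemma Rsum_map_lin {A} (x : R) (f1 f2 w : A -> R) l :
  Rsum (map (fun y => w y * (x + f1 y - f2 y)) l) =
  x * Rsum (map w l) + Rsum (map (fun y => w y * f1 y) l)
  - Rsum (map (fun y => w y * f2 y) l).
Proof. induction l; simpl; [ring| rewrite IHl; ring]. Qed.

Section Framework.
Variables (M : nat) (Q : nat -> nat -> R) (ps : R)
  (D : nat -> nat -> R) (g : nat -> nat -> nat -> R) (lam : R) (s1 : state).

Definition Ef (pi : policy) n (f : state -> bool -> R) : R :=
  Rsum (map (fun hq : list (state * bool) * R => let '(h, q) := hq in
     match h with [] => 0 | (s, a) :: _ => q * f s a end)
     (Defs.dist M Q ps pi s1 n)).

Definition Ph (h : state -> R) (s : state) (a : bool) : R :=
  Rsum (map (fun sp : state * R => snd sp * h (fst sp)) (kernel M Q ps s a)).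

Lemma Ef_step pi n h :
  Ef pi (S n) (fun s _ => h s) = Ef pi n (Ph h).
Proof.
  unfold Ef. cbn [Defs.dist]. rewrite Rsum_map_flat_map.
  apply Rsum_map_ext. intros [hist q] _.
  destruct hist as [|[s a] t]; [reflexivity|].
  rewrite Rsum_map_flat_map. unfold Ph.
  rewrite <- Rsum_map_scal. apply Rsum_map_ext.
  intros [s' pr] _. simpl. unfold act_prob. ring.
Qed.

Definition kernel_ok : Prop :=
  forall s a, valid_state M s -> forall s' pr, In (s', pr) (kernel M Q ps s a) ->
    valid_state M s' /\ 0 <= pr.

Lemma act_prob_bounds pi t s a : valid_policy pi -> 0 <= act_prob pi t s a <= 1.
Proof.
  intros Hv. unfold act_prob. specialize (Hv t s). destruct a; lra.
Qed.

Lemma dist_inv pi (Hpi : valid_policy pi) (KO : kernel_ok) (Hs1 : valid_state M s1) n :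
  forall hq, In hq (Defs.dist M Q ps pi s1 n) ->
  exists s a t q0, fst hq = (s, a) :: t /\ snd hq = q0 * act_prob pi t s a
     /\ 0 <= q0 /\ valid_state M s.
Proof.
  induction n; intros hq Hin.
  - simpl in Hin. destruct Hin as [<-|[<-|[]]].
    + exists s1, true, [], 1. simpl. repeat split; auto; lra.
    + exists s1, false, [], 1. simpl. repeat split; auto; lra.
  - cbn [Defs.dist] in Hin. apply in_flat_map in Hin as [[h q] [Hh Hin]].
    destruct (IHn _ Hh) as (s & a & t & q0 & E1 & E2 & Hq0 & Hv).
    simpl in E1, E2. subst h q.
    apply in_flat_map in Hin as [[s' pr] [Hk Hin]].
    destruct (KO s a Hv s' pr Hk) as [Hv' Hpr].
    pose proof (act_prob_bounds pi t s a Hpi).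
    simpl in Hin. destruct Hin as [<-|[<-|[]]].
    + exists s', true, ((s, a) :: t), (q0 * act_prob pi t s a * pr).
      simpl. repeat split; auto. apply Rmult_le_pos; [|auto]. apply Rmult_le_pos; lra.
    + exists s', false, ((s, a) :: t), (q0 * act_prob pi t s a * pr).
      simpl. repeat split; auto. apply Rmult_le_pos; [|auto]. apply Rmult_le_pos; lra.
Qed.

Section WithPolicy.
Variables (pi : policy) (Hpi : valid_policy pi) (KO : kernel_ok) (Hs1 : valid_state M s1).

Lemma Ef_ext n f f' : (forall s a, valid_state M s -> f s a = f' s a) -> Ef pi n f = Ef pi n f'.
Proof.
  intros H. unfold Ef. apply Rsum_map_ext. intros hq Hin.
  destruct (dist_inv pi Hpi KO Hs1 n hq Hin) as (s & a & t & q0 & E1 & E2 & _ & Hv).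
  destruct hq as [h q]. simpl in E1. subst h. rewrite H by auto. reflexivity.
Qed.

Lemma Ef_le n f f' : (forall s a, valid_state M s -> f s a <= f' s a) -> Ef pi n f <= Ef pi n f'.
Proof.
  intros H. unfold Ef. apply Rsum_map_le. intros hq Hin.
  destruct (dist_inv pi Hpi KO Hs1 n hq Hin) as (s & a & t & q0 & E1 & E2 & Hq0 & Hv).
  destruct hq as [h q]. simpl in E1, E2. subst h q.
  pose proof (act_prob_bounds pi t s a Hpi).
  apply Rmult_le_compat_l; [apply Rmult_le_pos; lra| auto].
Qed.

Lemma Ef_lin n x f1 f2 :
  Ef pi n (fun s a => x + f1 s a - f2 s a) =
  x * Ef pi n (fun _ _ => 1) + Ef pi n f1 - Ef pi n f2.
Proof.
  unfold Ef. induction (Defs.dist M Q ps pi s1 n) as [|[h q] l IH]; simpl; [ring|].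
  rewrite IH. destruct h as [|[s a] t]; ring.
Qed.

Lemma Ef_0 h : Ef pi 0 (fun s _ => h s) = h s1.
Proof. unfold Ef. simpl. unfold act_prob. ring. Qed.

Hypothesis KM : forall s a, valid_state M s -> Ph (fun _ => 1) s a = 1.

Lemma Ef_mass n : Ef pi n (fun _ _ => 1) = 1.
Proof.
  induction n.
  - unfold Ef. simpl. unfold act_prob. ring.
  - rewrite (Ef_step pi n (fun _ => 1)).
    rewrite (Ef_ext n _ (fun _ _ => 1)); auto.
Qed.

Lemma Ef_bound_above n h K : (forall s, valid_state M s -> h s <= K) ->
  Ef pi n (fun s _ => h s) <= K.
Proof.
  intros H. rewrite <- (Rmult_1_r K). rewrite <- (Ef_mass n).
  replace (K * Ef pi n (fun _ _ => 1)) with (Ef pi n (fun _ _ => K)).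
  - apply Ef_le. intros; auto.
  - unfold Ef. rewrite <- Rsum_map_scal. apply Rsum_map_ext.
    intros [[|[s a] t] q] _; ring.
Qed.

Lemma Ef_bound_below n h K : (forall s, valid_state M s -> K <= h s) ->
  K <= Ef pi n (fun s _ => h s).
Proof.
  intros H. rewrite <- (Rmult_1_r K). rewrite <- (Ef_mass n).
  replace (K * Ef pi n (fun _ _ => 1)) with (Ef pi n (fun _ _ => K)).
  - apply Ef_le. intros; auto.
  - unfold Ef. rewrite <- Rsum_map_scal. apply Rsum_map_ext.
    intros [[|[s a] t] q] _; ring.
Qed.

End WithPolicy.
End Framework.

Lemma limsup_lower (u : nat -> R) x C :
  (forall T, x + C / INR (S T) <= u T) -> Rbar_le x (LimSup_seq u).
Proof.
  intros H.
  assert (Hl : is_lim_seq (fun T => x + C / INR (S T)) x).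
  { assert (H0 : is_lim_seq (fun T => / INR (S T)) 0).
    { replace (Finite 0) with (Rbar_inv p_infty) by reflexivity.
      apply is_lim_seq_inv; [|discriminate].
      apply (is_lim_seq_incr_1 INR p_infty). apply is_lim_seq_INR. }
    apply (is_lim_seq_scal_l _ C) in H0. simpl in H0. rewrite Rmult_0_r in H0.
    pose proof (is_lim_seq_plus' _ _ x 0 (is_lim_seq_const x) H0) as H1.
    rewrite Rplus_0_r in H1. exact H1. }
  apply is_lim_LimSup_seq in Hl. apply is_LimSup_seq_unique in Hl.
  rewrite <- Hl. apply LimSup_le. exists O. intros n _. apply H.
Qed.

Lemma limsup_upper (u : nat -> R) x C :
  (forall T, u T <= x + C / INR (S T)) -> Rbar_le (LimSup_seq u) x.
Proof.
  intros H.
  assert (Hl : is_lim_seq (fun T => x + C / INR (S T)) x).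
  { assert (H0 : is_lim_seq (fun T => / INR (S T)) 0).
    { replace (Finite 0) with (Rbar_inv p_infty) by reflexivity.
      apply is_lim_seq_inv; [|discriminate].
      apply (is_lim_seq_incr_1 INR p_infty). apply is_lim_seq_INR. }
    apply (is_lim_seq_scal_l _ C) in H0. simpl in H0. rewrite Rmult_0_r in H0.
    pose proof (is_lim_seq_plus' _ _ x 0 (is_lim_seq_const x) H0) as H1.
    rewrite Rplus_0_r in H1. exact H1. }
  apply is_lim_LimSup_seq in Hl. apply is_LimSup_seq_unique in Hl.
  rewrite <- Hl. apply LimSup_le. exists O. intros n _. apply H.
Qed.

Section Bounds.
Variables (M : nat) (Q : nat -> nat -> R) (ps : R)
  (D : nat -> nat -> R) (g : nat -> nat -> nat -> R) (lam : R) (s1 : state).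
Variables (KO : kernel_ok M Q ps) (Hs1 : valid_state M s1)
  (KM : forall s a, valid_state M s -> Ph M Q ps (fun _ => 1) s a = 1).

Lemma tot_split (f : nat -> R) T :
  Rsum (map f (seq 0 (S (S T)))) = Rsum (map f (seq 0 (S T))) + f (S T).
Proof. rewrite (seq_S (S T)), map_app, Rsum_app. simpl. ring. Qed.

Theorem lower_bound pi (Hpi : valid_policy pi) x h K :
  (forall s, valid_state M s -> h s <= K) ->
  (forall s a, valid_state M s -> x + h s <= stage_cost D g lam s a + Ph M Q ps h s a) ->
  Rbar_le x (avg_cost M Q ps D g lam pi s1).
Proof.
  intros HK Hsub.
  assert (Hstep : forall n, x + Ef M Q ps s1 pi n (fun s _ => h s)
                  - Ef M Q ps s1 pi (S n) (fun s _ => h s)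
                  <= exp_cost M Q ps D g lam pi s1 n).
  { intros n. rewrite Ef_step.
    pose proof (Ef_lin M Q ps s1 pi n x (fun s _ => h s) (Ph M Q ps h)) as E1.
    pose proof (Ef_mass M Q ps s1 pi Hpi KO Hs1 KM n) as E2.
    change (exp_cost M Q ps D g lam pi s1 n) with (Ef M Q ps s1 pi n (stage_cost D g lam)).
    assert (E3 : Ef M Q ps s1 pi n (fun s a => x + h s - Ph M Q ps h s a)
                 <= Ef M Q ps s1 pi n (stage_cost D g lam)).
    { apply Ef_le; auto. intros s a Hv. specialize (Hsub s a Hv). lra. }
    rewrite E2 in E1. lra. }
  assert (Htel : forall T, INR (S T) * x + h s1 - Ef M Q ps s1 pi (S T) (fun s _ => h s)
     <= Rsum (map (exp_cost M Q ps D g lam pi s1) (seq 0 (S T)))).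
  { induction T.
    - simpl. rewrite <- (Ef_0 M Q ps s1 pi h). specialize (Hstep O). lra.
    - rewrite tot_split. specialize (Hstep (S T)). rewrite S_INR. lra. }
  apply (limsup_lower _ x (h s1 - K)). intros T.
  specialize (Htel T).
  pose proof (Ef_bound_above M Q ps s1 pi Hpi KO Hs1 KM (S T) h K HK).
  assert (HT : 0 < INR (S T)) by (apply lt_0_INR; lia).
  apply (Rmult_le_reg_r (INR (S T))); auto.
  unfold Rdiv. rewrite Rmult_assoc, Rinv_l by lra.
  rewrite Rmult_plus_distr_r, Rmult_assoc, Rinv_l by lra. lra.
Qed.

Definition act_sw (tau : option nat) (s : state) : bool :=
  let '(i, j, d) := s in
  if Nat.eqb i j then false
  else match tau with Some k => Nat.leb k d | None => false end.

Lemma act_prob_sw tau t s a :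
  act_prob (switching_policy (fun _ _ => tau)) t s a = if Bool.eqb a (act_sw tau s) then 1 else 0.
Proof.
  destruct s as [[i j] d]. unfold act_prob, switching_policy, act_sw.
  destruct (Nat.eqb i j); destruct a; simpl; try ring.
  all: destruct tau as [k|]; simpl; try ring; destruct (Nat.leb k d); simpl; ring.
Qed.

Lemma sw_valid tau : valid_policy (switching_policy (fun _ _ => tau)).
Proof.
  intros t s. destruct s as [[i j] d]. unfold switching_policy.
  destruct (Nat.eqb i j); [lra|]. destruct tau as [k|]; [destruct (Nat.leb k d)|]; lra.
Qed.

Lemma Ef_le_sw tau n f f' :
  (forall s, valid_state M s -> f s (act_sw tau s) <= f' s (act_sw tau s)) ->
  Ef M Q ps s1 (switching_policy (fun _ _ => tau)) n f <= Ef M Q ps s1 (switching_policy (fun _ _ => tau)) n f'.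
Proof.
  intros H. unfold Ef. apply Rsum_map_le. intros hq Hin.
  destruct (dist_inv M Q ps s1 _ (sw_valid tau) KO Hs1 n hq Hin)
    as (s & a & t & q0 & E1 & E2 & Hq0 & Hv).
  destruct hq as [hh q]. simpl in E1, E2. subst hh q.
  rewrite act_prob_sw.
  destruct (Bool.eqb a (act_sw tau s)) eqn:E.
  - apply Bool.eqb_prop in E. subst a. rewrite Rmult_1_r.
    apply Rmult_le_compat_l; auto.
  - rewrite Rmult_0_r, !Rmult_0_l. lra.
Qed.

Theorem upper_bound tau x h K :
  (forall s, valid_state M s -> K <= h s) ->
  (forall s, valid_state M s ->
     stage_cost D g lam s (act_sw tau s) + Ph M Q ps h s (act_sw tau s) <= x + h s) ->
  Rbar_le (avg_cost M Q ps D g lam (switching_policy (fun _ _ => tau)) s1) x.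
Proof.
  intros HK Hsup. set (pi := switching_policy (fun _ _ => tau)).
  assert (Hpi : valid_policy pi) by apply sw_valid.
  assert (Hstep : forall n, exp_cost M Q ps D g lam pi s1 n <=
     x + Ef M Q ps s1 pi n (fun s _ => h s) - Ef M Q ps s1 pi (S n) (fun s _ => h s)).
  { intros n. rewrite Ef_step.
    pose proof (Ef_lin M Q ps s1 pi n x (fun s _ => h s) (Ph M Q ps h)) as E1.
    pose proof (Ef_mass M Q ps s1 pi Hpi KO Hs1 KM n) as E2.
    change (exp_cost M Q ps D g lam pi s1 n) with (Ef M Q ps s1 pi n (stage_cost D g lam)).
    assert (E3 : Ef M Q ps s1 pi n (stage_cost D g lam) <=
                 Ef M Q ps s1 pi n (fun s a => x + h s - Ph M Q ps h s a)).
    { apply Ef_le_sw; auto. intros s Hv. specialize (Hsup s Hv). lra. }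
    rewrite E2 in E1. lra. }
  assert (Htel : forall T,
     Rsum (map (exp_cost M Q ps D g lam pi s1) (seq 0 (S T)))
     <= INR (S T) * x + h s1 - Ef M Q ps s1 pi (S T) (fun s _ => h s)).
  { induction T.
    - simpl. rewrite <- (Ef_0 M Q ps s1 pi h). specialize (Hstep O). lra.
    - rewrite tot_split. specialize (Hstep (S T)). rewrite S_INR. lra. }
  apply (limsup_upper _ x (h s1 - K)). intros T.
  specialize (Htel T).
  pose proof (Ef_bound_below M Q ps s1 pi Hpi KO Hs1 KM (S T) h K HK).
  assert (HT : 0 < INR (S T)) by (apply lt_0_INR; lia).
  apply (Rmult_le_reg_r (INR (S T))); auto.
  unfold Rdiv. rewrite Rmult_assoc, Rinv_l by lra.
  rewrite Rmult_plus_distr_r, Rmult_assoc, Rinv_l by lra. lra.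
Qed.

End Bounds.

Lemma filter_seq_S (f : nat -> bool) n :
  filter f (seq 0 (S n)) = filter f (seq 0 n) ++ (if f n then [n] else []).
Proof. rewrite seq_S, filter_app. simpl. destruct (f n); reflexivity. Qed.

Lemma len_filter_all (f : nat -> bool) n :
  (forall k, (k < n)%nat -> f k = true) -> length (filter f (seq 0 n)) = n.
Proof.
  induction n; intros H; auto. rewrite filter_seq_S, length_app.
  rewrite IHn by (intros; apply H; lia). rewrite H by lia. simpl. lia.
Qed.

Lemma cnt1 M i : (i < M)%nat ->
  length (filter (fun k => negb (Nat.eqb k i)) (seq 0 M)) = (M - 1)%nat.
Proof.
  induction M; intros Hi; [lia|].
  rewrite filter_seq_S, length_app.
  destruct (Nat.eq_dec i M) as [->|Hne].
  - rewrite len_filter_all.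
    + rewrite Nat.eqb_refl. simpl. lia.
    + intros k Hk. apply negb_true_iff, Nat.eqb_neq. lia.
  - rewrite IHM by lia. replace (negb (Nat.eqb M i)) with true.
    + simpl. lia.
    + symmetry. apply negb_true_iff, Nat.eqb_neq. lia.
Qed.

Lemma cnt2 M i j : (i < M)%nat -> (j < M)%nat -> i <> j ->
  length (filter (fun k => negb (Nat.eqb k i) && negb (Nat.eqb k j)) (seq 0 M)) = (M - 2)%nat.
Proof.
  revert i j. induction M; intros i j Hi Hj Hij; [lia|].
  rewrite filter_seq_S, length_app.
  destruct (Nat.eq_dec i M) as [->|Hne].
  - rewrite Nat.eqb_refl. simpl.
    rewrite (filter_ext_in _ (fun k => negb (Nat.eqb k j))).
    + rewrite cnt1 by lia. lia.
    + intros k Hk. apply in_seq in Hk.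
      replace (Nat.eqb k M) with false by (symmetry; apply Nat.eqb_neq; lia). reflexivity.
  - destruct (Nat.eq_dec j M) as [->|Hne2].
    + rewrite Nat.eqb_refl, andb_false_r. simpl.
      rewrite (filter_ext_in _ (fun k => negb (Nat.eqb k i))).
      * rewrite cnt1 by lia. lia.
      * intros k Hk. apply in_seq in Hk.
        replace (Nat.eqb k M) with false by (symmetry; apply Nat.eqb_neq; lia).
        rewrite andb_true_r. reflexivity.
    + rewrite IHM by lia.
      replace (Nat.eqb M i) with false by (symmetry; apply Nat.eqb_neq; lia).
      replace (Nat.eqb M j) with false by (symmetry; apply Nat.eqb_neq; lia).
      simpl. lia.
Qed.

Definition h_gen (hs : R) (u : nat -> R) (s : state) : R :=
  let '(i, j, d) := s in if Nat.eqb i j then hs else u d.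

Section Model.
Variables (M : nat) (Q : nat -> nat -> R) (ps p pbar : R).
Hypothesis HQoff : forall i j, (i < M)%nat -> (j < M)%nat -> i <> j -> Q i j = p.
Hypothesis HQdiag : forall i, (i < M)%nat -> Q i i = pbar.

Lemma sum_moves (P : nat -> bool) i j d w (f : state -> R) c :
  (forall k, In k (filter P (seq 0 M)) -> Q i k * w * f (k, j, d) = c) ->
  Rsum (map (fun sp : state * R => snd sp * f (fst sp))
     (map (fun k => ((k, j, d), Q i k * w)) (filter P (seq 0 M))))
  = INR (length (filter P (seq 0 M))) * c.
Proof.
  intros H. rewrite map_map. simpl.
  rewrite (Rsum_map_ext _ (fun _ => c)); [apply Rsum_map_const|].
  intros k Hk. apply H; auto.
Qed.

Lemma Ph_sync hs u i a : (i < M)%nat ->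
  Ph M Q ps (h_gen hs u) (i, i, 0%nat) a = pbar * hs + INR (M - 1) * (p * u 1%nat).
Proof.
  intros Hi. unfold Ph, kernel. rewrite Nat.eqb_refl. unfold sync_moves.
  cbn [map Rsum fst snd]. rewrite sum_moves with (c := p * u 1%nat).
  - rewrite cnt1 by auto. simpl. rewrite Nat.eqb_refl, HQdiag by auto. ring.
  - intros k Hk. apply filter_In in Hk as [Hk1 Hk2]. apply in_seq in Hk1.
    apply negb_true_iff in Hk2. simpl. rewrite Hk2.
    rewrite HQoff by (try lia; apply Nat.eqb_neq in Hk2; auto). ring.
Qed.

Lemma Ph_err hs u i j d : (i < M)%nat -> (j < M)%nat -> i <> j ->
  Ph M Q ps (h_gen hs u) (i, j, d) false =
  pbar * u (S d) + p * hs + INR (M - 2) * (p * u 1%nat).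
Proof.
  intros Hi Hj Hij. unfold Ph, kernel.
  replace (Nat.eqb i j) with false by (symmetry; apply Nat.eqb_neq; auto).
  unfold err_moves. cbn [map Rsum fst snd].
  rewrite sum_moves with (c := p * u 1%nat).
  - rewrite cnt2 by auto. simpl.
    replace (Nat.eqb i j) with false by (symmetry; apply Nat.eqb_neq; auto).
    rewrite Nat.eqb_refl, HQdiag, HQoff by auto. ring.
  - intros k Hk. apply filter_In in Hk as [Hk1 Hk2]. apply in_seq in Hk1.
    apply andb_true_iff in Hk2 as [H1 H2]. apply negb_true_iff, Nat.eqb_neq in H1.
    apply negb_true_iff in H2. simpl. rewrite H2.
    rewrite HQoff by (try lia; auto). ring.
Qed.

Lemma Ph_err_tr hs u i j d : (i < M)%nat -> (j < M)%nat -> i <> j ->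
  Ph M Q ps (h_gen hs u) (i, j, d) true =
  ps * (pbar * hs + INR (M - 1) * (p * u 1%nat))
  + (1 - ps) * (pbar * u (S d) + p * hs + INR (M - 2) * (p * u 1%nat)).
Proof.
  intros Hi Hj Hij. unfold Ph, kernel.
  replace (Nat.eqb i j) with false by (symmetry; apply Nat.eqb_neq; auto).
  rewrite map_app, Rsum_app.
  unfold sync_moves, err_moves. cbn [map Rsum fst snd].
  rewrite sum_moves with (c := p * ps * u 1%nat).
  2:{ intros k Hk. apply filter_In in Hk as [Hk1 Hk2]. apply in_seq in Hk1.
    apply negb_true_iff in Hk2. simpl. rewrite Hk2.
    rewrite HQoff by (try lia; apply Nat.eqb_neq in Hk2; auto). ring. }
  rewrite sum_moves with (c := p * (1 - ps) * u 1%nat).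
  2:{ intros k Hk. apply filter_In in Hk as [Hk1 Hk2]. apply in_seq in Hk1.
    apply andb_true_iff in Hk2 as [H1 H2]. apply negb_true_iff, Nat.eqb_neq in H1.
    apply negb_true_iff in H2. simpl. rewrite H2.
    rewrite HQoff by (try lia; auto). ring. }
  rewrite cnt1, cnt2 by auto. simpl.
  replace (Nat.eqb i j) with false by (symmetry; apply Nat.eqb_neq; auto).
  rewrite Nat.eqb_refl, HQdiag, HQoff by auto. rewrite Nat.eqb_refl. ring.
Qed.

Hypothesis HQnn : forall i j, (i < M)%nat -> (j < M)%nat -> 0 <= Q i j.
Hypothesis Hps : 0 <= ps <= 1.

Lemma model_kernel_ok : kernel_ok M Q ps.
Proof.
  intros [[i j] d] a Hv s' pr Hin. destruct Hv as (Hi & Hj & Hc).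
  unfold kernel in Hin.
  assert (Hsync : forall w, 0 <= w -> In (s', pr) (sync_moves M Q i w) ->
            valid_state M s' /\ 0 <= pr).
  { intros w Hw H. unfold sync_moves in H. destruct H as [H|H].
    - inversion H; subst. split; [unfold valid_state; auto|].
      apply Rmult_le_pos; auto.
    - apply in_map_iff in H as [k [Hk Hin']]. inversion Hk; subst.
      apply filter_In in Hin' as [Hk1 Hk2]. apply in_seq in Hk1.
      apply negb_true_iff, Nat.eqb_neq in Hk2.
      split; [unfold valid_state; repeat split; auto; lia|].
      apply Rmult_le_pos; auto. apply HQnn; lia. }
  assert (Herr : forall w, 0 <= w -> i <> j -> In (s', pr) (err_moves M Q i j d w) ->
            valid_state M s' /\ 0 <= pr).
  { intros w Hw Hij H. unfold err_moves in H. destruct H as [H|[H|H]].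
    - inversion H; subst. split; [unfold valid_state; repeat split; auto; right; split; auto; lia|].
      apply Rmult_le_pos; auto.
    - inversion H; subst. split; [unfold valid_state; auto|].
      apply Rmult_le_pos; auto.
    - apply in_map_iff in H as [k [Hk Hin']]. inversion Hk; subst.
      apply filter_In in Hin' as [Hk1 Hk2]. apply in_seq in Hk1.
      apply andb_true_iff in Hk2 as [H1 H2].
      apply negb_true_iff, Nat.eqb_neq in H1. apply negb_true_iff, Nat.eqb_neq in H2.
      split; [unfold valid_state; repeat split; auto; lia|].
      apply Rmult_le_pos; auto. apply HQnn; lia. }
  destruct (Nat.eqb i j) eqn:E.
  - apply (Hsync 1); auto; lra.
  - apply Nat.eqb_neq in E. destruct a.
    + apply in_app_or in Hin as [H|H]; [apply (Hsync ps)|apply (Herr (1 - ps))]; auto; lra.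
    + apply (Herr 1); auto; lra.
Qed.

Hypothesis Hsum : pbar + INR (M - 1) * p = 1.

Lemma model_mass s a : valid_state M s -> Ph M Q ps (fun _ => 1) s a = 1.
Proof.
  intros Hv.
  assert (E : Ph M Q ps (fun _ => 1) s a = Ph M Q ps (h_gen 1 (fun _ => 1)) s a).
  { unfold Ph. apply Rsum_map_ext. intros [[[i j] d] pr] _. simpl.
    destruct (Nat.eqb i j); reflexivity. }
  rewrite E. destruct s as [[i j] d]. destruct Hv as (Hi & Hj & [[-> ->]|[Hij Hd]]).
  - rewrite Ph_sync by auto. lra.
  - assert (HM : INR (M - 1) = INR (M - 2) + 1).
    { replace (M - 1)%nat with (S (M - 2)) by lia. apply S_INR. }
    destruct a; [rewrite Ph_err_tr by auto| rewrite Ph_err by auto]; nra.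
Qed.

End Model.

Lemma div_le a u v : 0 < a -> u <= v -> u / a <= v / a.
Proof. intros Ha H. unfold Rdiv. apply Rmult_le_compat_r; [left; apply Rinv_0_lt_compat|]; auto. Qed.

Lemma mul_div a u : 0 < a -> a * (u / a) = u.
Proof. intros. field. lra. Qed.

Lemma prefix_bound (f : nat -> R) N : exists K, forall k, (k <= N)%nat -> f k <= K.
Proof.
  induction N.
  - exists (f O). intros k Hk. replace k with O by lia. lra.
  - destruct IHN as [K HK]. exists (Rmax K (f (S N))). intros k Hk.
    destruct (Nat.eq_dec k (S N)) as [->|Hne]; [apply Rmax_r|].
    eapply Rle_trans; [apply HK; lia| apply Rmax_l].
Qed.

Lemma prefix_slack (f : nat -> R) N : (forall k, (k <= N)%nat -> 0 < f k) ->
  exists s, 0 < s /\ forall k, (k <= N)%nat -> s <= f k.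
Proof.
  induction N; intros H.
  - exists (f O). split; [apply H; lia|]. intros k Hk. replace k with O by lia. lra.
  - destruct IHN as [s [Hs HK]]; [intros; apply H; lia|].
    exists (Rmin s (f (S N))). split.
    + apply Rmin_glb_lt; auto.
    + intros k Hk. destruct (Nat.eq_dec k (S N)) as [->|Hne]; [apply Rmin_r|].
      eapply Rle_trans; [apply Rmin_l| apply HK; lia].
Qed.

Lemma least_nat (P : nat -> Prop) n : P n -> exists k, P k /\ forall j, (j < k)%nat -> ~ P j.
Proof.
  revert P. induction n; intros P H.
  - exists O. split; auto. intros j Hj. lia.
  - destruct (classic (P O)) as [H0|H0].
    + exists O. split; auto. intros j Hj. lia.
    + destruct (IHn (fun k => P (S k)) H) as [k [Hk Hl]].
      exists (S k). split; auto. intros j Hj. destruct j; auto.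
      apply Hl. lia.
Qed.


Section Seq.
Variables (p r ps lam pbar : R) (c : nat -> R).
Hypothesis Hp : 0 < p.
Hypothesis Hr : 0 <= r.
Hypothesis Hpb : 0 < pbar.
Hypothesis Hq1 : pbar + (p + r) = 1.
Hypothesis Hps : 0 <= ps <= 1.
Hypothesis Hlam : 0 <= lam.
Hypothesis Hc0 : forall d, (1 <= d)%nat -> 0 <= c d.
Hypothesis Hcm : forall d d', (1 <= d)%nat -> (d <= d')%nat -> c d <= c d'.

Definition qq := p + r.
Definition kq := p / qq.
Definition rho := (1 - ps) * pbar.
Definition al x d := c d - kq * x.
Definition be x d := c d + lam - (1 - ps) * kq * x.

Lemma qq_pos : 0 < qq. Proof. unfold qq; lra. Qed.
Lemma kq_pos : 0 < kq. Proof. unfold kq. pose proof qq_pos. apply Rdiv_lt_0_compat; lra. Qed.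
Lemma pbar_lt1 : pbar < 1. Proof. lra. Qed.
Lemma rho_nn : 0 <= rho. Proof. unfold rho. apply Rmult_le_pos; lra. Qed.
Lemma rho_le : rho <= pbar. Proof. unfold rho. assert (0 <= ps * pbar) by (apply Rmult_le_pos; lra). lra. Qed.
Lemma one_rho : 0 < 1 - rho. Proof. pose proof rho_le. lra. Qed.

Lemma al_mono x d d' : (1 <= d)%nat -> (d <= d')%nat -> al x d <= al x d'.
Proof. intros. unfold al. pose proof (Hcm d d' H H0). lra. Qed.
Lemma be_mono x d d' : (1 <= d)%nat -> (d <= d')%nat -> be x d <= be x d'.
Proof. intros. unfold be. pose proof (Hcm d d' H H0). lra. Qed.

Definition SubM x (u : nat -> R) :=
  x <= qq * u 1%nat /\
  forall d, (1 <= d)%nat ->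
    x + u d <= c d + pbar * u (S d) + r * u 1%nat /\
    x + u d <= c d + lam + ps * (qq * u 1%nat) + (1 - ps) * (pbar * u (S d) + r * u 1%nat).

Definition SupM x (u : nat -> R) (tr : nat -> bool) :=
  qq * u 1%nat <= x /\
  forall d, (1 <= d)%nat ->
    (tr d = false -> c d + pbar * u (S d) + r * u 1%nat <= x + u d) /\
    (tr d = true -> c d + lam + ps * (qq * u 1%nat) + (1 - ps) * (pbar * u (S d) + r * u 1%nat) <= x + u d).

Lemma id_no x d : c d + r * (x / qq) - x = al x d.
Proof. unfold al, kq. pose proof qq_pos. unfold qq in *. field. lra. Qed.
Lemma id_tr x d : c d + lam + ps * (qq * (x / qq)) + (1 - ps) * (r * (x / qq)) - x = be x d.
Proof. unfold be, kq. pose proof qq_pos. unfold qq in *. field. lra. Qed.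

Lemma SubM_of x (n : nat -> R) : n O = x / qq ->
  (forall k, n k - al x (S k) <= pbar * n (S k) /\ n k - be x (S k) <= rho * n (S k)) ->
  SubM x (fun d => n (pred d)).
Proof.
  intros H0 H. split.
  - simpl. rewrite H0, mul_div by apply qq_pos. lra.
  - intros d Hd. destruct d as [|k]; [lia|]. simpl pred. rewrite H0.
    destruct (H k) as [H1 H2]. pose proof (id_no x (S k)). pose proof (id_tr x (S k)).
    unfold rho in H2. split; nra.
Qed.

Lemma SupM_of x (n : nat -> R) (tr : nat -> bool) : n O = x / qq ->
  (forall k, (tr (S k) = false -> pbar * n (S k) <= n k - al x (S k)) /\
             (tr (S k) = true -> rho * n (S k) <= n k - be x (S k))) ->
  SupM x (fun d => n (pred d)) tr.
Proof.
  intros H0 H. split.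
  - simpl. rewrite H0, mul_div by apply qq_pos. lra.
  - intros d Hd. destruct d as [|k]; [lia|]. simpl pred. rewrite H0.
    destruct (H k) as [H1 H2]. pose proof (id_no x (S k)). pose proof (id_tr x (S k)).
    unfold rho in H2. split; intros E; [specialize (H1 E)|specialize (H2 E)]; nra.
Qed.

Definition LL x := Rmin (al x 1 / qq) (be x 1 / (1 - rho)).

Lemma LL_stable x d : (1 <= d)%nat ->
  LL x - al x d <= pbar * LL x /\ LL x - be x d <= rho * LL x.
Proof.
  intros Hd. pose proof qq_pos. pose proof one_rho.
  pose proof (al_mono x 1 d ltac:(lia) Hd). pose proof (be_mono x 1 d ltac:(lia) Hd).
  assert (A1 : qq * LL x <= al x 1).
  { rewrite <- (mul_div qq (al x 1)) by auto. apply Rmult_le_compat_l; [lra|apply Rmin_l]. }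
  assert (A2 : (1 - rho) * LL x <= be x 1).
  { rewrite <- (mul_div (1 - rho) (be x 1)) by auto. apply Rmult_le_compat_l; [lra|apply Rmin_r]. }
  unfold qq in A1.
  assert (pbar * LL x = LL x - (p + r) * LL x) by (replace pbar with (1 - (p + r)) by lra; ring).
  split; lra.
Qed.

Lemma LL_lip : exists KL, 0 <= KL /\ forall x x', x <= x' -> LL x - KL * (x' - x) <= LL x' <= LL x.
Proof.
  pose proof qq_pos. pose proof one_rho. pose proof kq_pos.
  exists (kq / qq + (1 - ps) * kq / (1 - rho)). split.
  - apply Rplus_le_le_0_compat; unfold Rdiv; apply Rmult_le_pos; try (left; apply Rinv_0_lt_compat; lra).
    lra. apply Rmult_le_pos; lra.
  - intros x x' Hx. unfold LL.
    assert (E1 : al x' 1 / qq = al x 1 / qq - kq / qq * (x' - x)) by (unfold al; field; lra).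
    assert (E2 : be x' 1 / (1 - rho) = be x 1 / (1 - rho) - (1 - ps) * kq / (1 - rho) * (x' - x))
      by (unfold be; field; lra).
    assert (P1 : 0 <= kq / qq * (x' - x)).
    { apply Rmult_le_pos; [|lra]. unfold Rdiv. apply Rmult_le_pos; [lra|left; apply Rinv_0_lt_compat; lra]. }
    assert (P2 : 0 <= (1 - ps) * kq / (1 - rho) * (x' - x)).
    { apply Rmult_le_pos; [|lra]. unfold Rdiv. apply Rmult_le_pos; [apply Rmult_le_pos; lra|left; apply Rinv_0_lt_compat; lra]. }
    rewrite E1, E2. split.
    + pose proof (Rmin_l (al x 1 / qq) (be x 1 / (1 - rho))).
      pose proof (Rmin_r (al x 1 / qq) (be x 1 / (1 - rho))).
      apply Rmin_glb; lra.
    + apply Rmin_glb.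
      * eapply Rle_trans; [apply Rmin_l|]. lra.
      * eapply Rle_trans; [apply Rmin_r|]. lra.
Qed.

Lemma LL_neg1 : 0 <= LL (-1).
Proof.
  pose proof qq_pos. pose proof one_rho. pose proof kq_pos. pose proof (Hc0 1 (le_n 1)).
  unfold LL, al, be. apply Rmin_glb; unfold Rdiv; apply Rmult_le_pos;
    try (left; apply Rinv_0_lt_compat; lra); nra.
Qed.


Definition tr_of (tau : option nat) (d : nat) : bool :=
  match tau with Some k => Nat.leb k d | None => false end.

Definition good_tau (tau : option nat) : Prop :=
  match tau with Some k => (1 <= k)%nat | None => True end.

Definition Result : Prop :=
  (forall x, exists u K, SubM x u /\ forall d, u d <= K) \/
  exists xs tau u Kb, good_tau tau /\ SupM xs u (tr_of tau) /\ (forall d, Kb <= u d) /\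
    (forall x, x < xs -> exists u' K, SubM x u' /\ forall d, u' d <= K).

Section PosRho.
Hypothesis Hps1 : ps < 1.
Lemma rho_pos : 0 < rho. Proof. unfold rho; apply Rmult_lt_0_compat; lra. Qed.

Definition F x d y := Rmax ((y - al x d) / pbar) ((y - be x d) / rho).
Fixpoint mm x k := match k with O => x / qq | S k' => F x (S k') (mm x k') end.
Definition GG x := exists k, mm x k < LL x.

Lemma F_ge x d y : y - al x d <= pbar * F x d y /\ y - be x d <= rho * F x d y.
Proof.
  pose proof rho_pos. unfold F. split.
  - rewrite <- (mul_div pbar (y - al x d)) at 1 by lra. apply Rmult_le_compat_l; [lra| apply Rmax_l].
  - rewrite <- (mul_div rho (y - be x d)) at 1 by lra. apply Rmult_le_compat_l; [lra| apply Rmax_r].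
Qed.

Lemma F_cases x d y : pbar * F x d y = y - al x d \/ rho * F x d y = y - be x d.
Proof.
  pose proof rho_pos. unfold F. apply Rmax_case; [left|right]; apply mul_div; lra.
Qed.

Lemma F_mono_lip x x' d y y' a : x <= x' -> y <= y' -> y' <= y + a ->
  F x d y <= F x' d y' <= F x d y + (a + kq * (x' - x)) / rho.
Proof.
  intros Hx Hy Ha. pose proof rho_pos. pose proof kq_pos. pose proof rho_le.
  set (N := a + kq * (x' - x)).
  assert (HN : 0 <= N) by (unfold N; nra).
  assert (E1 : (y' - al x' d) / pbar = (y - al x d) / pbar + (y' - y + kq * (x' - x)) / pbar)
    by (unfold al; field; lra).
  assert (E2 : (y' - be x' d) / rho = (y - be x d) / rho + (y' - y + (1 - ps) * kq * (x' - x)) / rho)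
    by (unfold be; field; lra).
  assert (A1 : 0 <= (y' - y + kq * (x' - x)) / pbar).
  { unfold Rdiv. apply Rmult_le_pos; [nra|left; apply Rinv_0_lt_compat; lra]. }
  assert (A2 : (y' - y + kq * (x' - x)) / pbar <= N / rho).
  { apply Rle_trans with (N / pbar). apply div_le; [lra|unfold N; lra].
    unfold Rdiv. apply Rmult_le_compat_l; auto. apply Rinv_le_contravar; lra. }
  assert (B1 : 0 <= (y' - y + (1 - ps) * kq * (x' - x)) / rho).
  { unfold Rdiv. apply Rmult_le_pos; [|left; apply Rinv_0_lt_compat; lra].
    assert (0 <= (1 - ps) * kq * (x' - x)) by (apply Rmult_le_pos; [apply Rmult_le_pos|]; lra). lra. }
  assert (B2 : (y' - y + (1 - ps) * kq * (x' - x)) / rho <= N / rho).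
  { apply div_le; auto. unfold N.
    assert ((1 - ps) * kq * (x' - x) <= kq * (x' - x)).
    { assert (0 <= ps * kq * (x' - x)) by (apply Rmult_le_pos; [apply Rmult_le_pos|]; lra). nra. }
    lra. }
  unfold F. rewrite E1, E2. fold N.
  unfold Rmax. destruct (Rle_dec _ _); destruct (Rle_dec _ _); split; lra.
Qed.

Lemma mm_lip k : exists K, 0 <= K /\ forall x x', x <= x' -> mm x k <= mm x' k <= mm x k + K * (x' - x).
Proof.
  pose proof qq_pos. pose proof rho_pos. pose proof kq_pos.
  induction k.
  - exists (/ qq). split; [left; apply Rinv_0_lt_compat; lra|].
    intros x x' Hx. simpl. split; [apply div_le; lra|]. unfold Rdiv. nra.
  - destruct IHk as [K [HK HH]]. exists ((K + kq) / rho). split.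
    { unfold Rdiv. apply Rmult_le_pos; [lra|left; apply Rinv_0_lt_compat; lra]. }
    intros x x' Hx. simpl. destruct (HH x x' Hx) as [G1 G2].
    destruct (F_mono_lip x x' (S k) (mm x k) (mm x' k) (K * (x' - x)) Hx G1 G2) as [F1 F2].
    split; auto. replace ((K + kq) / rho * (x' - x)) with ((K * (x' - x) + kq * (x' - x)) / rho)
      by (field; lra). auto.
Qed.

Lemma GG_down x x' : x' <= x -> GG x -> GG x'.
Proof.
  intros Hx [k Hk]. exists k. destruct (mm_lip k) as [K [_ HK]].
  destruct (HK x' x Hx). destruct LL_lip as [KL [_ HL]]. destruct (HL x' x Hx). lra.
Qed.

Lemma GG_neg1 : GG (-1).
Proof.
  exists O. simpl. pose proof LL_neg1. pose proof qq_pos.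
  assert (0 < 1 / qq) by (apply Rdiv_lt_0_compat; lra).
  unfold Rdiv in *. lra.
Qed.

Lemma GG_open x : GG x -> exists x', x < x' /\ GG x'.
Proof.
  intros [k Hk]. destruct (mm_lip k) as [K [HK0 HK]]. destruct LL_lip as [KL [HKL HL]].
  set (e := LL x - mm x k).
  set (dl := e / (2 * (K + KL + 1))).
  assert (Hdl : 0 < dl) by (unfold dl, e; apply Rdiv_lt_0_compat; lra).
  assert (Hdl2 : (K + KL) * dl < e).
  { assert (0 < e) by (unfold e; lra).
    apply Rle_lt_trans with ((K + KL + 1) * dl).
    - apply Rmult_le_compat_r; lra.
    - unfold dl. replace ((K + KL + 1) * (e / (2 * (K + KL + 1)))) with (e / 2) by (field; lra). lra. }
  exists (x + dl). split; [lra|]. exists k.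
  destruct (HK x (x + dl) ltac:(lra)). destruct (HL x (x + dl) ltac:(lra)).
  replace (x + dl - x) with dl in * by ring. unfold e in Hdl2. nra.
Qed.

Fixpoint nn x k := match k with
  | O => x / qq
  | S k' => if Rle_dec (nn x k') (LL x) then LL x else F x (S k') (nn x k') end.

Lemma nn_step x k : nn x k - al x (S k) <= pbar * nn x (S k) /\ nn x k - be x (S k) <= rho * nn x (S k).
Proof.
  simpl. destruct (Rle_dec (nn x k) (LL x)) as [Hl|Hl].
  - destruct (LL_stable x (S k) ltac:(lia)). split; lra.
  - apply F_ge.
Qed.

Lemma nn_cases x k : nn x k = mm x k \/ nn x k = LL x.
Proof.
  induction k; [left; reflexivity|]. simpl.
  destruct (Rle_dec (nn x k) (LL x)) as [Hl|Hl]; [right; reflexivity|].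
  destruct IHk as [E|E]; [left; rewrite E; reflexivity| rewrite E in Hl; lra].
Qed.

Lemma nn_after x k0 : nn x k0 <= LL x -> forall j, nn x (k0 + j) <= LL x.
Proof.
  intros H j. induction j; [rewrite Nat.add_0_r; auto|].
  rewrite Nat.add_succ_r. simpl. destruct (Rle_dec (nn x (k0 + j)) (LL x)); [lra|contradiction].
Qed.

Lemma GG_sub x : GG x -> exists u K, SubM x u /\ forall d, u d <= K.
Proof.
  intros [k0 Hk0].
  assert (H0 : nn x k0 <= LL x) by (destruct (nn_cases x k0) as [E|E]; rewrite E; lra).
  destruct (prefix_bound (nn x) k0) as [K0 HK0].
  exists (fun d => nn x (pred d)), (Rmax K0 (LL x)). split.
  - apply SubM_of; [reflexivity|]. apply nn_step.
  - intros d. destruct (le_lt_dec (pred d) k0) as [Hd|Hd].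
    + eapply Rle_trans; [apply HK0; auto| apply Rmax_l].
    + replace (pred d) with (k0 + (pred d - k0))%nat by lia.
      eapply Rle_trans; [apply nn_after; auto| apply Rmax_r].
Qed.

Lemma F_minus_mono x d y y' : y <= y' -> F x d y - y <= F x d y' - y'.
Proof.
  intros Hy. pose proof rho_pos. pose proof rho_le.
  assert (E1 : (y' - al x d) / pbar = (y - al x d) / pbar + (y' - y) / pbar) by (field; lra).
  assert (E2 : (y' - be x d) / rho = (y - be x d) / rho + (y' - y) / rho) by (field; lra).
  assert (A : y' - y <= (y' - y) / pbar).
  { rewrite <- (Rmult_1_r (y' - y)) at 1. unfold Rdiv. apply Rmult_le_compat_l; [lra|].
    rewrite <- Rinv_1. apply Rinv_le_contravar; lra. }
  assert (B : y' - y <= (y' - y) / rho).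
  { rewrite <- (Rmult_1_r (y' - y)) at 1. unfold Rdiv. apply Rmult_le_compat_l; [lra|].
    rewrite <- Rinv_1. apply Rinv_le_contravar; lra. }
  unfold F. rewrite E1, E2. unfold Rmax. destruct (Rle_dec _ _); destruct (Rle_dec _ _); lra.
Qed.

Lemma F_idx x d d' y : (1 <= d)%nat -> (d <= d')%nat -> F x d' y <= F x d y.
Proof.
  intros H1 H2. pose proof rho_pos. pose proof (al_mono x d d' H1 H2). pose proof (be_mono x d d' H1 H2).
  unfold F. eapply Rle_trans; [apply Rle_max_compat_l|apply Rle_max_compat_r]; apply div_le; lra.
Qed.

Lemma mm_mono_of x : (forall k, LL x <= mm x k) -> forall k, mm x k <= mm x (S k).
Proof.
  intros HL k0. destruct (Rle_lt_dec (mm x k0) (mm x (S k0))) as [H|H]; auto. exfalso.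
  set (dl := mm x k0 - mm x (S k0)).
  assert (Hdl : 0 < dl) by (unfold dl; lra).
  assert (Hst : forall j, mm x (S (k0 + j)) - mm x (k0 + j) <= - dl).
  { induction j.
    - rewrite Nat.add_0_r. unfold dl. lra.
    - rewrite Nat.add_succ_r. change (mm x (S (S (k0 + j)))) with (F x (S (S (k0 + j))) (mm x (S (k0 + j)))).
      pose proof (F_idx x (S (k0 + j)) (S (S (k0 + j))) (mm x (S (k0 + j))) ltac:(lia) ltac:(lia)).
      pose proof (F_minus_mono x (S (k0 + j)) (mm x (S (k0 + j))) (mm x (k0 + j)) ltac:(lra)).
      change (F x (S (k0 + j)) (mm x (k0 + j))) with (mm x (S (k0 + j))) in H1. lra. }
  assert (Hlin : forall j, mm x (k0 + j) <= mm x k0 - INR j * dl).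
  { induction j; [rewrite Nat.add_0_r; simpl; lra|].
    rewrite Nat.add_succ_r, S_INR. specialize (Hst j). lra. }
  destruct (INR_unbounded ((mm x k0 - LL x) / dl)) as [n Hn].
  specialize (Hlin n). specialize (HL (k0 + n)%nat).
  assert (INR n * dl > mm x k0 - LL x).
  { apply Rmult_gt_compat_r with (r := dl) in Hn; auto. unfold Rdiv in Hn.
    rewrite Rmult_assoc, Rinv_l in Hn by lra. lra. }
  lra.
Qed.

Lemma be_al x d : be x d - al x d = lam + ps * kq * x.
Proof. unfold be, al. ring. Qed.

Theorem main_pos : Result.
Proof.
  pose proof rho_pos. pose proof kq_pos.
  destruct (classic (bound GG)) as [Hb|Hnb].
  2:{ left. intros x. apply GG_sub.
      destruct (classic (exists y, GG y /\ x <= y)) as [[y [Hy Hxy]]|Hn].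
      - eapply GG_down; eauto.
      - exfalso. apply Hnb. exists x. intros y Hy. apply Rnot_lt_le. intros Hlt.
        apply Hn. exists y. split; auto. lra. }
  right.
  destruct (completeness GG Hb (ex_intro _ (-1) GG_neg1)) as [xs [Hub Hlub]].
  assert (Hbelow : forall x, x < xs -> GG x).
  { intros x Hx. destruct (classic (exists y, GG y /\ x <= y)) as [[y [Hy Hxy]]|Hn].
    - eapply GG_down; eauto.
    - exfalso. assert (is_upper_bound GG x).
      { intros y Hy. apply Rnot_lt_le. intros Hlt. apply Hn. exists y. split; auto. lra. }
      specialize (Hlub x H1). lra. }
  assert (HL : forall k, LL xs <= mm xs k).
  { intros k. apply Rnot_lt_le. intros Hk.
    destruct (GG_open xs (ex_intro _ k Hk)) as [x' [Hx' Gx']].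
    specialize (Hub x' Gx'). lra. }
  pose proof (mm_mono_of xs HL) as Hmono.
  set (Cond := fun k => lam + ps * kq * xs <= ps * pbar * mm xs (S k)).
  assert (Hup : forall k k', (k <= k')%nat -> Cond k -> Cond k').
  { intros k k' Hk. unfold Cond. induction Hk; auto. intros Hc. specialize (IHHk Hc).
    specialize (Hmono (S m)). assert (0 <= ps * pbar) by (apply Rmult_le_pos; lra). nra. }
  assert (Hcore : forall k, (Cond k -> rho * mm xs (S k) <= mm xs k - be xs (S k)) /\
                            (~ Cond k -> pbar * mm xs (S k) <= mm xs k - al xs (S k))).
  { intros k. unfold Cond. change (mm xs (S k)) with (F xs (S k) (mm xs k)).
    pose proof (be_al xs (S k)).
    assert (Er : rho * F xs (S k) (mm xs k) = pbar * F xs (S k) (mm xs k) - ps * pbar * F xs (S k) (mm xs k))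
      by (unfold rho; ring).
    destruct (F_cases xs (S k) (mm xs k)) as [E|E]; split; intros Hc.
    - lra.
    - lra.
    - lra.
    - apply Rnot_le_lt in Hc. lra. }
  destruct (classic (exists k, Cond k)) as [[k1 Hk1]|Hno].
  - destruct (least_nat Cond k1 Hk1) as [k0 [Hk0 Hleast]].
    exists xs, (Some (S k0)), (fun d => mm xs (pred d)), (LL xs).
    split; [simpl; lia|]. split.
    + apply SupM_of; [reflexivity|]. intros k. simpl tr_of.
      destruct (Hcore k) as [C1 C2]. split; intros E.
      * apply Nat.leb_gt in E. apply C2. apply Hleast. lia.
      * apply Nat.leb_le in E. apply C1. apply (Hup k0); [lia|auto].
    + split; [intros d; apply HL|]. intros x Hx. apply GG_sub, Hbelow; auto.
  - exists xs, None, (fun d => mm xs (pred d)), (LL xs).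
    split; [simpl; auto|]. split.
    + apply SupM_of; [reflexivity|]. intros k. simpl tr_of.
      destruct (Hcore k) as [C1 C2]. split; intros E; [|discriminate].
      apply C2. intros Hc. apply Hno. exists k. auto.
    + split; [intros d; apply HL|]. intros x Hx. apply GG_sub, Hbelow; auto.
Qed.

End PosRho.

Section ZeroRho.
Hypothesis Hps1 : ps = 1.
Lemma rho_z : rho = 0. Proof. unfold rho. rewrite Hps1. ring. Qed.
Lemma be_z x d : be x d = c d + lam. Proof. unfold be. rewrite Hps1. ring. Qed.

Fixpoint mz x k := match k with O => x / qq | S k' => (mz x k' - al x (S k')) / pbar end.
Definition GZ x := exists k, mz x k < LL x /\ forall j, (j < k)%nat -> mz x j <= be x (S j).

Lemma mz_lip k : exists K, 0 <= K /\ forall j x x', (j <= k)%nat -> x <= x' ->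
  mz x j <= mz x' j <= mz x j + K * (x' - x).
Proof.
  pose proof qq_pos. pose proof kq_pos.
  induction k.
  - exists (/ qq). split; [left; apply Rinv_0_lt_compat; lra|].
    intros j x x' Hj Hx. replace j with O by lia. simpl. split; [apply div_le; lra|]. unfold Rdiv. nra.
  - destruct IHk as [K [HK HH]]. exists (Rmax K ((K + kq) / pbar)). split.
    { eapply Rle_trans; [apply HK|apply Rmax_l]. }
    intros j x x' Hj Hx. destruct (Nat.eq_dec j (S k)) as [->|Hne].
    + simpl. destruct (HH k x x' (le_n k) Hx) as [G1 G2].
      assert (E : (mz x' k - al x' (S k)) / pbar = (mz x k - al x (S k)) / pbar + (mz x' k - mz x k + kq * (x' - x)) / pbar)
        by (unfold al; field; lra).
      rewrite E.
      assert (0 <= (mz x' k - mz x k + kq * (x' - x)) / pbar).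
      { unfold Rdiv. apply Rmult_le_pos; [nra|left; apply Rinv_0_lt_compat; lra]. }
      split; [lra|].
      assert ((mz x' k - mz x k + kq * (x' - x)) / pbar <= (K + kq) / pbar * (x' - x)).
      { replace ((K + kq) / pbar * (x' - x)) with ((K * (x' - x) + kq * (x' - x)) / pbar) by (field; lra).
        apply div_le; lra. }
      assert ((K + kq) / pbar * (x' - x) <= Rmax K ((K + kq) / pbar) * (x' - x)).
      { apply Rmult_le_compat_r; [lra|apply Rmax_r]. }
      lra.
    + destruct (HH j x x' ltac:(lia) Hx) as [G1 G2]. split; auto.
      assert (K * (x' - x) <= Rmax K ((K + kq) / pbar) * (x' - x)).
      { apply Rmult_le_compat_r; [lra|apply Rmax_l]. }
      lra.
Qed.

Lemma GZ_down x x' : x' <= x -> GZ x -> GZ x'.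
Proof.
  intros Hx [k [Hk Hf]]. exists k. destruct (mz_lip k) as [K [_ HK]].
  destruct LL_lip as [KL [_ HL]]. destruct (HL x' x Hx).
  split.
  - destruct (HK k x' x (le_n k) Hx). lra.
  - intros j Hj. destruct (HK j x' x ltac:(lia) Hx). specialize (Hf j Hj). rewrite (be_z x'). rewrite (be_z x) in Hf. lra.
Qed.

Lemma GZ_neg1 : GZ (-1).
Proof.
  exists O. split; [|intros; lia]. simpl. pose proof LL_neg1. pose proof qq_pos.
  assert (0 < 1 / qq) by (apply Rdiv_lt_0_compat; lra).
  unfold Rdiv in *. lra.
Qed.

Fixpoint nz x k := match k with
  | O => x / qq
  | S k' => if Rle_dec (nz x k') (LL x) then LL x else (nz x k' - al x (S k')) / pbar end.

Lemma nz_cases x k : nz x k = mz x k \/ nz x k = LL x.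
Proof.
  induction k; [left; reflexivity|]. simpl.
  destruct (Rle_dec (nz x k) (LL x)) as [Hl|Hl]; [right; reflexivity|].
  destruct IHk as [E|E]; [left; rewrite E; reflexivity| rewrite E in Hl; lra].
Qed.

Lemma nz_after x k0 : nz x k0 <= LL x -> forall j, nz x (k0 + j) <= LL x.
Proof.
  intros H j. induction j; [rewrite Nat.add_0_r; auto|].
  rewrite Nat.add_succ_r. simpl. destruct (Rle_dec (nz x (k0 + j)) (LL x)); [lra|contradiction].
Qed.

Lemma GZ_sub x : GZ x -> exists u K, SubM x u /\ forall d, u d <= K.
Proof.
  intros [k0 [Hk0 Hf]].
  assert (H0 : nz x k0 <= LL x) by (destruct (nz_cases x k0) as [E|E]; rewrite E; lra).
  destruct (prefix_bound (nz x) k0) as [K0 HK0].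
  exists (fun d => nz x (pred d)), (Rmax K0 (LL x)). split.
  - apply SubM_of; [reflexivity|]. intros k. rewrite rho_z, Rmult_0_l.
    destruct (LL_stable x (S k) ltac:(lia)) as [S1 S2]. rewrite rho_z in S2.
    simpl. destruct (Rle_dec (nz x k) (LL x)) as [Hl|Hl].
    + split; lra.
    + split.
      * rewrite mul_div; lra.
      * destruct (nz_cases x k) as [E|E]; [|lra]. rewrite E.
        destruct (le_lt_dec k0 k) as [Hk|Hk].
        -- exfalso. apply Hl. replace k with (k0 + (k - k0))%nat by lia. apply nz_after; auto.
        -- specialize (Hf k Hk). lra.
  - intros d. destruct (le_lt_dec (pred d) k0) as [Hd|Hd].
    + eapply Rle_trans; [apply HK0; auto| apply Rmax_l].
    + replace (pred d) with (k0 + (pred d - k0))%nat by lia.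
      eapply Rle_trans; [apply nz_after; auto| apply Rmax_r].
Qed.

Theorem main_zero : Result.
Proof.
  pose proof kq_pos. pose proof rho_z as Hr0.
  destruct (classic (bound GZ)) as [Hb|Hnb].
  2:{ left. intros x. apply GZ_sub.
      destruct (classic (exists y, GZ y /\ x <= y)) as [[y [Hy Hxy]]|Hn].
      - eapply GZ_down; eauto.
      - exfalso. apply Hnb. exists x. intros y Hy. apply Rnot_lt_le. intros Hlt.
        apply Hn. exists y. split; auto. lra. }
  right.
  destruct (completeness GZ Hb (ex_intro _ (-1) GZ_neg1)) as [xs [Hub Hlub]].
  assert (Hbelow : forall x, x < xs -> GZ x).
  { intros x Hx. destruct (classic (exists y, GZ y /\ x <= y)) as [[y [Hy Hxy]]|Hn].
    - eapply GZ_down; eauto.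
    - exfalso. assert (is_upper_bound GZ x).
      { intros y Hy. apply Rnot_lt_le. intros Hlt. apply Hn. exists y. split; auto. lra. }
      specialize (Hlub x H0). lra. }
  destruct (classic (exists k0, be xs (S k0) <= mz xs k0)) as [[k0 Hk0]|Hnone].
  - set (n := fun k => if Nat.leb k k0 then mz xs k else be xs (S k)).
    destruct (prefix_bound (fun k => - mz xs k) k0) as [K0 HK0].
    exists xs, (Some (S k0)), (fun d => n (pred d)), (Rmin (- K0) 0).
    split; [simpl; lia|]. split.
    + apply SupM_of; [unfold n; simpl; reflexivity|]. intros k. simpl tr_of.
      split; intros E.
      * apply Nat.leb_gt in E. unfold n.
        replace (Nat.leb k k0) with true by (symmetry; apply Nat.leb_le; lia).
        replace (Nat.leb (S k) k0) with true by (symmetry; apply Nat.leb_le; lia).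
        simpl. rewrite mul_div; lra.
      * apply Nat.leb_le in E. rewrite Hr0, Rmult_0_l. unfold n.
        destruct (Nat.eq_dec k k0) as [->|Hne].
        -- rewrite Nat.leb_refl. lra.
        -- replace (Nat.leb k k0) with false by (symmetry; apply Nat.leb_gt; lia). lra.
    + split.
      * intros d. unfold n. destruct (Nat.leb (pred d) k0) eqn:E.
        -- apply Nat.leb_le in E. specialize (HK0 _ E). pose proof (Rmin_l (- K0) 0). lra.
        -- rewrite be_z. pose proof (Hc0 (S (pred d)) ltac:(lia)).
           pose proof (Rmin_r (- K0) 0). lra.
      * intros x Hx. apply GZ_sub, Hbelow; auto.
  - assert (Hfeas : forall k, mz xs k < be xs (S k)).
    { intros k. apply Rnot_le_lt. intros Hk. apply Hnone. exists k. auto. }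
    assert (HL : forall k, LL xs <= mz xs k).
    { intros k. apply Rnot_lt_le. intros Hk.
      set (f := fun j => if Nat.eqb j k then LL xs - mz xs k else be xs (S j) - mz xs j).
      destruct (prefix_slack f k) as [s [Hs Hsl]].
      { intros j Hj. unfold f. destruct (Nat.eqb j k); [lra|]. specialize (Hfeas j). lra. }
      destruct (mz_lip k) as [K [HK0 HK]]. destruct LL_lip as [KL [HKL HLl]].
      set (dl := s / (2 * (K + KL + 1))).
      assert (Hdl : 0 < dl) by (unfold dl; apply Rdiv_lt_0_compat; lra).
      assert (Hdl2 : (K + KL) * dl < s).
      { apply Rle_lt_trans with ((K + KL + 1) * dl).
        - apply Rmult_le_compat_r; lra.
        - unfold dl. replace ((K + KL + 1) * (s / (2 * (K + KL + 1)))) with (s / 2) by (field; lra). lra. }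
      assert (GZ (xs + dl)).
      { exists k. split.
        - destruct (HK k xs (xs + dl) (le_n k) ltac:(lra)). destruct (HLl xs (xs + dl) ltac:(lra)).
          specialize (Hsl k (le_n k)). unfold f in Hsl. rewrite Nat.eqb_refl in Hsl.
          replace (xs + dl - xs) with dl in * by ring. nra.
        - intros j Hj. destruct (HK j xs (xs + dl) ltac:(lia) ltac:(lra)).
          specialize (Hsl j ltac:(lia)). unfold f in Hsl.
          replace (Nat.eqb j k) with false in Hsl by (symmetry; apply Nat.eqb_neq; lia).
          rewrite (be_z (xs + dl)). rewrite (be_z xs) in Hsl.
          replace (xs + dl - xs) with dl in * by ring.
          assert (K * dl <= (K + KL) * dl) by nra. lra. }
      match goal with HG : GZ (xs + dl) |- _ => specialize (Hub _ HG) end. lra. }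
    exists xs, None, (fun d => mz xs (pred d)), (LL xs).
    split; [simpl; auto|]. split.
    + apply SupM_of; [reflexivity|]. intros k. simpl tr_of.
      split; intros E; [|discriminate]. simpl. rewrite mul_div; lra.
    + split; [intros d; apply HL|]. intros x Hx. apply GZ_sub, Hbelow; auto.
Qed.

End ZeroRho.

Theorem main_result : Result.
Proof.
  destruct (Req_dec ps 1) as [E|E].
  - apply main_zero; auto.
  - apply main_pos. lra.
Qed.

End Seq.

Lemma Rbar_le_all (y : Rbar) : (forall x : R, Rbar_le x y) -> y = p_infty.
Proof.
  intros H. destruct y as [r| |]; auto.
  - specialize (H (r + 1)). simpl in H. lra.
  - specialize (H 0). simpl in H. contradiction.
Qed.

Lemma Rbar_le_below (xs : R) (y : Rbar) : (forall x, x < xs -> Rbar_le x y) -> Rbar_le xs y.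
Proof.
  intros H. destruct y as [r| |]; simpl; auto.
  - apply Rnot_lt_le. intros Hlt. specialize (H ((r + xs) / 2) ltac:(lra)). simpl in H. lra.
  - specialize (H (xs - 1) ltac:(lra)). simpl in H. auto.
Qed.

Lemma Ph_zero M Q ps s a : Ph M Q ps (fun _ => 0) s a = 0.
Proof.
  unfold Ph. rewrite (Rsum_map_ext _ (fun _ => 0)); [rewrite Rsum_map_const; ring|].
  intros; ring.
Qed.

Theorem corollary2
  (M : nat) (Q : nat -> nat -> R) (ps : R)
  (D : nat -> nat -> R) (g : nat -> nat -> nat -> R) (lam : R)
  (s1 : state)
  (* standing assumptions of the model *)
  (HQ : stochastic M Q) (Hirr : irreducible M Q)
  (Hdiag : exists i, (i < M)%nat /\ 0 < Q i i)
  (Hps : 0 <= ps <= 1)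
  (HD : forall i j, (i < M)%nat -> (j < M)%nat -> i <> j -> 0 < D i j)
  (Hg_nn : forall i j d, (i < M)%nat -> (j < M)%nat -> i <> j -> (1 <= d)%nat -> 0 <= g i j d)
  (Hg_mono : forall i j d d', (i < M)%nat -> (j < M)%nat -> i <> j ->
               (1 <= d)%nat -> (d <= d')%nat -> g i j d <= g i j d')
  (Hlam : 0 <= lam)
  (Hs1 : valid_state M s1)
  (* non-prioritized, symmetric source *)
  (D0 : R) (g0 : nat -> R) (p pbar : R)
  (HDsym : forall i j, (i < M)%nat -> (j < M)%nat -> i <> j -> D i j = D0)
  (Hgsym : forall i j, (i < M)%nat -> (j < M)%nat -> i <> j -> g i j = g0)
  (HQoff : forall i j, (i < M)%nat -> (j < M)%nat -> i <> j -> Q i j = p)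
  (HQdiag : forall i, (i < M)%nat -> Q i i = pbar)
  (Hsum : pbar + INR (M - 1) * p = 1)
  (Hp : 0 < p < 1) :
  exists tau : option nat,
    valid_threshold tau /\
    optimal M Q ps D g lam s1 (switching_policy (fun _ _ => tau)).
Proof.
  pose proof (model_kernel_ok M Q ps (proj1 HQ) Hps) as KO.
  pose proof (model_mass M Q ps p pbar HQoff HQdiag Hsum) as KM.
  assert (Hcost_nn : forall s a, valid_state M s -> 0 <= stage_cost D g lam s a).
  { intros [[i j] d] a (Hi & Hj & Hc). unfold stage_cost.
    destruct (Nat.eqb i j) eqn:E.
    - destruct a; lra.
    - apply Nat.eqb_neq in E. destruct Hc as [[? ?]|[_ Hd]]; [contradiction|].
      pose proof (HD i j Hi Hj E). pose proof (Hg_nn i j d Hi Hj E Hd).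
      assert (0 <= D i j * g i j d) by (apply Rmult_le_pos; lra). destruct a; lra. }
  assert (HM1 : (1 <= M)%nat) by (destruct s1 as [[i j] d]; destruct Hs1; lia).
  destruct (Nat.eq_dec M 1) as [HM|HM].
  -
    exists None. split; [exact I|]. split; [apply sw_valid|].
    intros pi' Hpi'. apply Rbar_le_trans with (Finite 0).
    + apply (upper_bound M Q ps D g lam s1 KO Hs1 KM None 0 (fun _ => 0) 0).
      * intros; lra.
      * intros [[i j] d] (Hi & Hj & Hc). rewrite Ph_zero.
        assert (i = j) by lia. subst j. simpl. rewrite Nat.eqb_refl. lra.
    + apply (lower_bound M Q ps D g lam s1 KO Hs1 KM pi' Hpi' 0 (fun _ => 0) 0).
      * intros; lra.
      * intros s a Hv. rewrite Ph_zero. pose proof (Hcost_nn s a Hv). lra.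
  - assert (HM2 : (2 <= M)%nat) by lia.
    set (r := INR (M - 2) * p).
    set (c := fun d => D0 * g0 d).
    assert (HINR : INR (M - 1) = INR (M - 2) + 1).
    { replace (M - 1)%nat with (S (M - 2)) by lia. apply S_INR. }
    assert (Hr : 0 <= r) by (unfold r; apply Rmult_le_pos; [apply pos_INR|lra]).
    assert (Hq : INR (M - 1) * p = p + r) by (unfold r; rewrite HINR; ring).
    assert (Hpb : 0 < pbar).
    { destruct Hdiag as [i [Hi Hqi]]. rewrite HQdiag in Hqi; auto. }
    assert (HD0 : 0 < D0) by (rewrite <- (HDsym 0%nat 1%nat) by lia; apply HD; lia).
    assert (Hc0 : forall d, (1 <= d)%nat -> 0 <= c d).
    { intros d Hd. unfold c. apply Rmult_le_pos; [lra|].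
      rewrite <- (Hgsym 0%nat 1%nat) by lia. apply Hg_nn; lia. }
    assert (Hcm : forall d d', (1 <= d)%nat -> (d <= d')%nat -> c d <= c d').
    { intros d d' Hd Hdd. unfold c. apply Rmult_le_compat_l; [lra|].
      rewrite <- (Hgsym 0%nat 1%nat) by lia. apply Hg_mono; lia. }
    assert (Hcs : forall i j d, (i < M)%nat -> (j < M)%nat -> i <> j -> D i j * g i j d = c d).
    { intros i j d Hi Hj Hij. rewrite HDsym, Hgsym by auto. reflexivity. }
    pose proof (main_result p r ps lam pbar c (proj1 Hp) Hr Hpb ltac:(lra) Hps Hlam Hc0 Hcm) as Res.
    assert (Hsub : forall x u K, SubM p r ps lam pbar c x u -> (forall d, u d <= K) ->
              forall pi', valid_policy pi' -> Rbar_le x (avg_cost M Q ps D g lam pi' s1)).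
    { intros x u K [S0 S1] HK pi' Hpi'.
      apply (lower_bound M Q ps D g lam s1 KO Hs1 KM pi' Hpi' x (h_gen 0 u) (Rmax 0 K)).
      - intros [[i j] d] _. unfold h_gen. destruct (Nat.eqb i j); [apply Rmax_l|].
        eapply Rle_trans; [apply HK|apply Rmax_r].
      - intros [[i j] d] a (Hi & Hj & Hc). unfold qq in S0.
        destruct (Nat.eqb i j) eqn:E.
        + apply Nat.eqb_eq in E. subst j. destruct Hc as [[_ ->]|[Hc _]]; [|contradiction].
          rewrite (Ph_sync M Q ps p pbar HQoff HQdiag) by auto. unfold stage_cost, h_gen. rewrite Nat.eqb_refl.
          rewrite <- Rmult_assoc, (Rmult_comm _ p), Rmult_assoc in *.
          assert (INR (M - 1) * (p * u 1%nat) = (p + r) * u 1%nat) by (rewrite <- Hq; ring).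
          destruct a; lra.
        + apply Nat.eqb_neq in E. destruct Hc as [[? _]|[_ Hd]]; [contradiction|].
          destruct (S1 d Hd) as [T1 T2].
          unfold stage_cost, h_gen. replace (Nat.eqb i j) with false by (symmetry; apply Nat.eqb_neq; auto).
          rewrite Hcs by auto. fold (h_gen 0 u).
          assert (INR (M - 1) * (p * u 1%nat) = (p + r) * u 1%nat) by (rewrite <- Hq; ring).
          assert (INR (M - 2) * (p * u 1%nat) = r * u 1%nat) by (unfold r; ring).
          destruct a.
          * rewrite (Ph_err_tr M Q ps p pbar HQoff HQdiag) by auto. unfold qq in T2. rewrite H, H0. lra.
          * rewrite (Ph_err M Q ps p pbar HQoff HQdiag) by auto. rewrite H0. lra. }
    destruct Res as [Hall|(xs & tau & u & Kb & Htau & [P0 P1] & HKb & Hbel)].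
    + exists None. split; [exact I|]. split; [apply sw_valid|].
      intros pi' Hpi'.
      assert (E : avg_cost M Q ps D g lam pi' s1 = p_infty).
      { apply Rbar_le_all. intros x. destruct (Hall x) as [u [K [HS HK]]]. eapply Hsub; eauto. }
      rewrite E. destruct (avg_cost M Q ps D g lam (switching_policy (fun _ _ => None)) s1); simpl; auto.
    + exists tau. split; [destruct tau; simpl in *; auto|]. split; [apply sw_valid|].
      intros pi' Hpi'. apply Rbar_le_trans with (Finite xs).
      * apply (upper_bound M Q ps D g lam s1 KO Hs1 KM tau xs (h_gen 0 u) (Rmin 0 Kb)).
        -- intros [[i j] d] _. unfold h_gen. destruct (Nat.eqb i j); [apply Rmin_l|].
           eapply Rle_trans; [apply Rmin_r|apply HKb].
        -- intros [[i j] d] (Hi & Hj & Hc). unfold qq in P0.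
           destruct (Nat.eqb i j) eqn:E.
           ++ apply Nat.eqb_eq in E. subst j. destruct Hc as [[_ ->]|[Hc _]]; [|contradiction].
              unfold act_sw. rewrite Nat.eqb_refl.
              rewrite (Ph_sync M Q ps p pbar HQoff HQdiag) by auto. unfold stage_cost, h_gen. rewrite Nat.eqb_refl.
              assert (INR (M - 1) * (p * u 1%nat) = (p + r) * u 1%nat) by (rewrite <- Hq; ring).
              lra.
           ++ apply Nat.eqb_neq in E. destruct Hc as [[? _]|[_ Hd]]; [contradiction|].
              destruct (P1 d Hd) as [T1 T2].
              unfold act_sw, stage_cost, h_gen.
              replace (Nat.eqb i j) with false by (symmetry; apply Nat.eqb_neq; auto).
              rewrite Hcs by auto. fold (h_gen 0 u).
              assert (INR (M - 1) * (p * u 1%nat) = (p + r) * u 1%nat) by (rewrite <- Hq; ring).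
              assert (INR (M - 2) * (p * u 1%nat) = r * u 1%nat) by (unfold r; ring).
              change (match tau with Some k => Nat.leb k d | None => false end) with (tr_of tau d).
              destruct (tr_of tau d) eqn:Etr.
              ** rewrite (Ph_err_tr M Q ps p pbar HQoff HQdiag) by auto. specialize (T2 eq_refl). unfold qq in T2. rewrite H, H0. lra.
              ** rewrite (Ph_err M Q ps p pbar HQoff HQdiag) by auto. specialize (T1 eq_refl). rewrite H0. lra.
      * apply Rbar_le_below. intros x Hx. destruct (Hbel x Hx) as [u' [K [HS HK]]].
        eapply Hsub; eauto.
Qed.
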